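(* Let $N\ge1$ and consider the infinite $N$-ary tree with vertex set $V$ and conductance $1$ on every edge, with base point $o=\emptyset$. Let $\eta=\eta_1\dots\eta_n\in V$ with $n\ge1$. Then the solution (potential) $v$ in the energy space $E$ of $\Delta v=\delta_\emptyset-\delta_\eta$ is given by $$v(\omega_1\dots\omega_m)=n-p(\omega_1\dots\omega_m,\eta_1\dots\eta_n),$$ where $p(\omega,\eta)$ is the length of the longest common prefix of $\omega$ and $\eta$ (the largest $p\ge0$ with $p\le m,n$ and $\omega_i=\eta_i$ for $i=1,\dots,p$). Moreover the resistance metric is $$\operatorname{dist}(x,y)=\sqrt{2\,l(x,y)},\qquad x,y\in V,$$ where $l(x,y)$ is the length of the shortest path from $x$ to $y$ in the tree.
   Context: $V$ is the set of finite words over $\{1,\dots,N\}$ including the empty word $\emptyset$; edges are exactly the pairs $\{\omega,\omega i\}$ ($\omega i$ = $\omega$ with letter $i$ appended). The Laplacian is $(\Delta v)(x)=\sum_{y\sim x}(v(x)-v(y))$. The energy Hilbert space $E$ is the completion (modulo constants) of functions $u$ on $V$ with respect to $\|u\|_E^2=\sum_{x\in V}\sum_{y\sim x}|u(x)-u(y)|^2$, with energy form $\mathcal E(u',u)=\sum_x\sum_{y\sim x}\overline{(u'(x)-u'(y))}(u(x)-u(y))$. For each $x\in V$, $v_x\in E$ denotes the solution, unique up to an additive constant, of $\Delta v_x=\delta_\emptyset-\delta_x$ (with $v_\emptyset$ constant), and the resistance metric is $\operatorname{dist}(x,y)=\|v_x-v_y\|_E$.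
   Formalization: All functions on V are real-valued, and the potential $v_x$ is a finite-energy solution of $\Delta v_x=\delta_\emptyset-\delta_x$ that also satisfies $\mathcal E(v_x,u)=2(u(\emptyset)-u(x))$ for every finite-energy function u. Apart from conventions, each condition added here is assumed in the paper as well or is needed for the statement above to hold. *)

(* Defs.v *)
From HB Require Import structures.
From mathcomp Require Import all_boot all_order all_algebra.
From mathcomp Require Import all_classical all_reals all_analysis.
Set Implicit Arguments. Unset Strict Implicit. Unset Printing Implicit Defensive.
Import Order.TTheory GRing.Theory Num.Theory numFieldNormedType.Exports.
Local Open Scope ring_scope.

(* Vertices of the N-ary tree: finite words over the alphabet 'I_N
   (letter i : 'I_N stands for the letter i+1 of {1,...,N}).
   The empty word [::] is the root (base point o). *)
Definition word (N : nat) := seq 'I_N.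

Definition adj (N : nat) (x y : word N) : bool :=
  [exists i : 'I_N, y == rcons x i] || [exists i : 'I_N, x == rcons y i].

Definition parent (N : nat) (x : word N) : word N := take (size x).-1 x.

Definition nbrs (N : nat) (x : word N) : seq (word N) :=
  [seq rcons x i | i <- enum 'I_N] ++ (if x is [::] then [::] else [:: parent x]).

Definition laplacian (R : realType) (N : nat) (v : word N -> R) (x : word N) : R :=
  \sum_(y <- nbrs x) (v x - v y).

Definition dirac (R : realType) (N : nat) (a x : word N) : R :=
  if x == a then 1 else 0.

Definition partial_form (R : realType) (N : nat) (u' u : word N -> R) (K : nat) : R :=
  \sum_(k < K.+1) \sum_(t : k.-tuple 'I_N)
     \sum_(y <- nbrs (tval t)) (u' (tval t) - u' y) * (u (tval t) - u y).

Definition finite_energy (R : realType) (N : nat) (u : word N -> R) : Prop :=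
  cvgn (partial_form u u).

Definition energy_form (R : realType) (N : nat) (u' u : word N -> R) : R :=
  limn (partial_form u' u).

Definition energy_norm (R : realType) (N : nat) (u : word N -> R) : R :=
  Num.sqrt (energy_form u u).

(* v is (a representative of) the potential v_x in the energy space E:
   v has finite energy, solves Delta v = delta_root - delta_x, and is the
   energy representer of that equation, i.e.  E(v,u) = 2 (u(root) - u(x))
   for all u in E (the factor 2 comes from each edge being counted twice in
   the energy).  This pins v down uniquely up to an additive constant. *)
Definition is_potential (R : realType) (N : nat) (x : word N) (v : word N -> R) : Prop :=
  [/\ finite_energy v,
      (forall z, laplacian v z = dirac R [::] z - dirac R x z)
    & (forall u : word N -> R, finite_energy u ->
         energy_form v u = 2 * (u [::] - u x))].

Fixpoint common_prefix (N : nat) (w e : word N) : nat :=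
  match w, e with
  | a :: w', b :: e' => if a == b then (common_prefix w' e').+1 else 0
  | _, _ => 0
  end.

Definition shortest_path_length (N : nat) (x y : word N) (k : nat) : Prop :=
  (exists p : seq (word N), [/\ path (@adj N) x p, last x p = y & size p = k])
  /\ (forall p : seq (word N), path (@adj N) x p -> last x p = y -> (k <= size p)%N).

(* Main.v *)
Require Import Defs.
From HB Require Import structures.
From mathcomp Require Import all_boot all_order all_algebra.
From mathcomp Require Import all_classical all_reals all_analysis.
From mathcomp Require Import ring lra zify.
Import Order.TTheory GRing.Theory Num.Theory numFieldNormedType.Exports.
Set Implicit Arguments. Unset Strict Implicit. Unset Printing Implicit Defensive.

Section CP.
Variable N : nat.
Implicit Types w e : word N.

Lemma cp_size w e : (common_prefix w e <= size w)%N /\ (common_prefix w e <= size e)%N.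
Proof.
elim: w e => [|a w IH] [|b e] //=; case: eqP => _ //; have [] := IH e; lia.
Qed.

Lemma cpC w e : common_prefix w e = common_prefix e w.
Proof. elim: w e => [|a w IH] [|b e] //=; by rewrite IH eq_sym; case: eqP. Qed.

Lemma cpxx w : common_prefix w w = size w.
Proof. by elim: w => //= a w ->; rewrite eqxx. Qed.

Lemma cp_nil w : common_prefix [::] w = 0%N.
Proof. by []. Qed.

Lemma cp_rcons d w i e : common_prefix (rcons w i) e =
  (common_prefix w e + [&& common_prefix w e == size w, (size w < size e)%N &
     nth d e (size w) == i])%N.
Proof.
elim: w e => [|a w IH] [|b e] //=; first by rewrite eq_sym; case: eqP.
case: eqP => _ //=; by rewrite IH.
Qed.

Lemma cp_take w e : (common_prefix w e == size w) = (take (size w) e == w).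
Proof.
elim: w e => [|a w IH] [|b e] //=.
rewrite eqseq_cons (eq_sym b a); case: (a =P b) => [_|h] /=; first by rewrite eqSS IH.
done.
Qed.

Definition tdist w e := (size w + size e - 2 * common_prefix w e)%N.

Lemma cp_rcons_bounds w i e : (common_prefix w e <= common_prefix (rcons w i) e <= (common_prefix w e).+1)%N.
Proof. rewrite (cp_rcons i); case: [&& _, _ & _] => /=; lia. Qed.

Lemma cp_rcons_lt w i e : (common_prefix w e < size w)%N -> common_prefix (rcons w i) e = common_prefix w e.
Proof. move=> h; rewrite (cp_rcons i); have -> : (common_prefix w e == size w) = false by apply/eqP; lia. by rewrite addn0. Qed.

Lemma adj_dist (a b y : word N) : adj a b -> (tdist a y <= (tdist b y).+1)%N.
Proof.
rewrite /adj /tdist => /orP[/existsP[i /eqP->]|/existsP[i /eqP->]];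
  have := cp_rcons_bounds a i y; have := cp_rcons_bounds b i y;
  have := cp_size a y; have := cp_size b y; 
  have := cp_size (rcons a i) y; have := cp_size (rcons b i) y; rewrite !size_rcons; lia.
Qed.

Lemma path_lb (x y : word N) p : path (@adj N) x p -> last x p = y -> (tdist x y <= size p)%N.
Proof.
elim: p x => [|z p IH] x /=.
  by move=> _ ->; rewrite /tdist cpxx; lia.
move=> /andP[hxz hp] hl; have := IH z hp hl; have := adj_dist y hxz; lia.
Qed.

Lemma adj_rcons (x : word N) i : adj x (rcons x i).
Proof. by rewrite /adj; apply/orP; left; apply/existsP; exists i. Qed.
Lemma adj_rcons' (x : word N) i : adj (rcons x i) x.
Proof. by rewrite /adj; apply/orP; right; apply/existsP; exists i. Qed.

Lemma path_ex (x y : word N) : exists p, [/\ path (@adj N) x p, last x p = y & size p = tdist x y].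
Proof.
move: {2}(size x + size y)%N (leqnn (size x + size y)%N) => n.
elim: n x y => [|n IH] x y.
  case: x => //; case: y => // _; by exists [::].
move=> hs.
have [hx hy] := cp_size x y.
case: (ltnP (common_prefix x y) (size x)) => hlt.
  case/lastP: x hs hx hy hlt => [|x' i] hs hx hy hlt; first by [].
  have hc : common_prefix (rcons x' i) y = common_prefix x' y.
    case: (ltnP (common_prefix x' y) (size x')) => h; first exact: cp_rcons_lt.
    have := cp_rcons_bounds x' i y; have := cp_size x' y; rewrite size_rcons in hlt; lia.
  have [q [q1 q2 q3]] := IH x' y (ltac:(rewrite size_rcons in hs; lia)).
  exists (x' :: q); split => //=; first by rewrite adj_rcons'.
  rewrite q3 /tdist hc size_rcons; have := cp_size x' y; rewrite hc size_rcons in hlt; lia.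
have hpx : common_prefix x y = size x by lia.
clear hlt; case/lastP: y hs hx hy hpx => [|y' j] hs hx hy hpx.
  by exists [::]; case: x hs hx hy hpx => //.
case: (eqVneq x (rcons y' j)) => [->|hne].
  by exists [::]; rewrite /tdist cpxx; split => //=; lia.
have hs' : (size x <= size y')%N.
  rewrite size_rcons in hy; case: (ltnP (size x) (size y').+1) => // h.
  have e1 : size x = (size y').+1 by lia.
  move: hne; have /eqP := hpx; rewrite cp_take e1 -(size_rcons y' j) take_size => /eqP ->; by rewrite eqxx.
have hc : common_prefix x y' = size x.
  rewrite cpC in hpx *; have [h|h] : (common_prefix y' x < size y')%N \/ (size y' <= common_prefix y' x)%N by lia.
    by rewrite cpC -(cp_rcons_lt j h).
  rewrite cpC; have := cp_size y' x; lia.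
have [q [q1 q2 q3]] := IH x y' (ltac:(rewrite size_rcons in hs; lia)).
exists (rcons q (rcons y' j)); split.
- by rewrite rcons_path q1 q2 adj_rcons.
- by rewrite last_rcons.
- rewrite size_rcons q3 /tdist hc hpx size_rcons; lia.
Qed.

End CP.

Local Open Scope ring_scope.

Lemma nbrs_nil N : nbrs ([::] : word N) = [seq [:: k] | k <- enum 'I_N].
Proof. by rewrite /nbrs cats0. Qed.

Lemma nbrs_rcons N (x : word N) i :
  nbrs (rcons x i) = [seq rcons (rcons x i) k | k <- enum 'I_N] ++ [:: x].
Proof.
rewrite /nbrs /parent size_rcons /= -cats1 take_size_cat //.
by case: x.
Qed.

Section Pot.
Variables (R : realType) (N : nat) (d : 'I_N) (eta : word N).

Definition v0 (w : word N) : R := (size eta)%:R - (common_prefix w eta)%:R.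

Lemma v0_diff x i : v0 x - v0 (rcons x i) =
  ([&& common_prefix x eta == size x, (size x < size eta)%N &
     nth d eta (size x) == i] : nat)%:R.
Proof. by rewrite /v0 (cp_rcons d) natrD; ring. Qed.

Lemma child_sum (F : word N -> R) x :
  \sum_(i <- enum 'I_N) (v0 x - v0 (rcons x i)) * F (rcons x i) =
  if (common_prefix x eta == size x) && (size x < size eta)%N
  then F (take (size x).+1 eta) else 0.
Proof.
under eq_bigr do rewrite v0_diff.
case: ifP => [/andP[h1 h2]|h].
  rewrite big_enum /= (bigD1 (nth d eta (size x))) //= h1 h2 eqxx /= mul1r big1 ?addr0.
    by rewrite (take_nth d h2); move: h1; rewrite cp_take => /eqP ->.
  by move=> k hk; rewrite eq_sym (negbTE hk) mul0r.
rewrite big1 // => k _.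
by move: h; case: (_ == _); case: (_ < _)%N => //= _; rewrite mul0r.
Qed.

Lemma G_formula (F : word N -> R) x :
  \sum_(y <- nbrs x) (v0 x - v0 y) * F y =
  if common_prefix x eta == size x then
    (if (size x < size eta)%N then F (take (size x).+1 eta) else 0)
    - (if (0 < size x)%N then F (parent x) else 0)
  else 0.
Proof.
case/lastP: x => [|x i].
  rewrite nbrs_nil big_map /=.
  have := child_sum F [::]; rewrite big_map /= => ->.
  by case: (0 < size eta)%N; rewrite subr0.
rewrite nbrs_rcons big_cat big_map /= child_sum big_seq1.
rewrite /parent size_rcons /= -cats1 take_size_cat // cats1.
rewrite /v0 (cp_rcons d).
move: (cp_size x eta) => [hx _].
case E: [&& _, _ & _].
  move: E => /and3P[/eqP E1 E2 E3]; rewrite E1 addn1 eqxx /= -[(size x).+1]addn1 natrD; ring.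
rewrite addn0.
have -> : (common_prefix x eta == (size x).+1) = false by apply/eqP; lia.
rewrite andFb /=; ring.
Qed.

End Pot.

Section PF.
Variables (R : realType) (N : nat) (d : 'I_N) (eta : word N).
Local Notation v := (v0 R eta).

Lemma sum_v0_1 z : \sum_(y <- nbrs z) (v z - v y) =
  if common_prefix z eta == size z then
    (if (size z < size eta)%N then 1 else 0) - (if (0 < size z)%N then 1 else 0)
  else 0.
Proof.
rewrite -(G_formula d eta (fun _ => 1)); apply: eq_bigr => y _; by rewrite mulr1.
Qed.

Lemma lap_v0 z : laplacian v z = Defs.dirac R [::] z - Defs.dirac R eta z.
Proof.
rewrite /laplacian sum_v0_1 /Defs.dirac.
have [hz _] := cp_size z eta.
case: eqP => hp.
  have ht : take (size z) eta = z by apply/eqP; rewrite -cp_take hp.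
  case/lastP: z hz hp ht => [|z' i] hz hp ht /=.
    rewrite (eq_sym [::]) -size_eq0; case: (size eta) => [|m] /=; ring.
  have -> : (rcons z' i == [::]) = false by rewrite -size_eq0 size_rcons.
  rewrite size_rcons /=.
  case: ltnP => hl.
    have -> : (rcons z' i == eta) = false.
      by apply/negP => /eqP E; rewrite -E size_rcons ltnn in hl.
    ring.
  have E : rcons z' i = eta.
    have e : size (rcons z' i) = size eta by have := cp_size (rcons z' i) eta; rewrite size_rcons in hp hl *; lia.
    by rewrite -ht e take_size.
  rewrite E eqxx; ring.
have -> : (z == [::]) = false by apply/eqP => E; rewrite E in hp.
have -> : (z == eta) = false by apply/eqP => E; rewrite E cpxx in hp.
ring.
Qed.

Variable u : word N -> R.

Definition S x := \sum_(y <- nbrs x) (v x - v y) * (u x - u y).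

Lemma S_eq x : S x = u x * laplacian v x - \sum_(y <- nbrs x) (v x - v y) * u y.
Proof. rewrite /S /laplacian big_distrr -sumrB; apply: eq_bigr => y _. rewrite /=; ring. Qed.

Lemma S_nonprefix x : common_prefix x eta != size x -> S x = 0.
Proof.
move=> h; rewrite S_eq lap_v0 (G_formula d) (negbTE h) /Defs.dirac.
have -> : (x == [::]) = false by apply/eqP => E; rewrite E in h.
have -> : (x == eta) = false by apply/eqP => E; rewrite E cpxx eqxx in h.
ring.
Qed.

Definition a k := u (take k eta).

Lemma S_prefix j : (j <= size eta)%N -> S (take j eta) =
  (if (j < size eta)%N then a j - a j.+1 else 0) + (if (0 < j)%N then a j.-1 - a j else 0).
Proof.
move=> hj; rewrite S_eq lap_v0 (G_formula d) /Defs.dirac /parent.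
have hs : size (take j eta) = j by rewrite size_takel.
rewrite hs take_takel ?leq_pred //.
have -> : (common_prefix (take j eta) eta == j) by rewrite -{2}hs cp_take hs.
have -> : (take j eta == [::]) = (j == 0)%N by rewrite -size_eq0 hs.
rewrite /a.
have [->|jpos] : (j = 0 \/ 0 < j)%N by lia.
  rewrite take0 eqxx /=; case: (ltnP 0 (size eta)) => h.
    have -> : ([::] == eta) = false by apply/eqP => E; rewrite -E in h.
    ring.
  have E : eta = [::] by move: h; rewrite leqn0 size_eq0 => /eqP.
  rewrite E /=. ring.
have -> : (j == 0)%N = false by lia.
rewrite jpos.
have [jl|je] : (j < size eta \/ j = size eta)%N by lia.
  have -> : (take j eta == eta) = false by apply/eqP => E; rewrite -E hs ltnn in jl.
  rewrite jl; ring.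
rewrite je take_size eqxx ltnn; ring.
Qed.

Lemma layer k : \sum_(t : k.-tuple 'I_N) S (tval t) =
  if (k <= size eta)%N then S (take k eta) else 0.
Proof.
case: leqP => hk.
  have hs : size (take k eta) == k by rewrite size_takel.
  rewrite (bigD1 (Tuple hs)) //= big1 ?addr0 // => t ht.
  apply: S_nonprefix; apply/negP; rewrite cp_take size_tuple => /eqP E.
  by move/eqP: ht; apply; apply: val_inj; rewrite /= E.
rewrite big1 // => t _; apply: S_nonprefix; apply/eqP => E.
have := cp_size (tval t) eta; rewrite E size_tuple; lia.
Qed.

Lemma pf_v0 K : (size eta <= K)%N -> partial_form v u K = 2 * (u [::] - u eta).
Proof.
move=> hK.
have -> : partial_form v u K = \sum_(k < K.+1) \sum_(t : k.-tuple 'I_N) S (tval t) by [].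
under eq_bigr do rewrite layer.
rewrite -(big_mkord xpredT (fun k => if (k <= size eta)%N then S (take k eta) else 0)).
rewrite (big_cat_nat _ (n := (size eta).+1)) //= [X in _ + X]big1_seq ?addr0; last first.
  by move=> k /andP[_]; rewrite mem_index_iota => /andP[hk _]; rewrite leqNgt hk.
rewrite big_nat_cond (eq_bigr (fun k => S (take k eta))); last first.
  by move=> k /andP[/andP[_]]; rewrite ltnS => -> _.
rewrite -big_nat_cond.
rewrite big_nat_cond (eq_bigr (fun k => (if (k < size eta)%N then a k - a k.+1 else 0) +
   (if (0 < k)%N then a k.-1 - a k else 0))); last first.
  by move=> k /andP[/andP[_]]; rewrite ltnS => hk _; rewrite S_prefix.
rewrite -big_nat_cond big_split /=.
rewrite big_nat_recr //= ltnn addr0 big_nat_recl //= add0r.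
have e1 : \sum_(0 <= i < size eta) (if (i < size eta)%N then a i - a i.+1 else 0)
   = \sum_(0 <= i < size eta) (a i - a i.+1).
  by rewrite big_nat_cond [RHS]big_nat_cond; apply: eq_bigr => i /andP[/andP[_ ->]].
rewrite e1.
have e2 : \sum_(0 <= i < size eta) (a i - a i.+1) = a 0 - a (size eta).
  rewrite -[LHS]opprK -sumrN.
  under eq_bigr do rewrite opprB.
  by rewrite telescope_sumr // opprB.
rewrite e2 /a take0 take_size; ring.
Qed.

End PF.

Section EvCst.
Local Open Scope classical_set_scope.
Lemma ev_cst (R : realType) (f : nat -> R) c m :
  (forall K, (m <= K)%N -> f K = c) -> cvgn f /\ limn f = c.
Proof.
move=> H.
have h : f @ \oo --> c by apply: cvg_near_cst; exists m => // K /= hK; exact: H.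
split; [by apply/cvg_ex; exists c | exact: cvg_lim].
Qed.
End EvCst.


Section PFgen.
Variables (R : realType) (N : nat).
Implicit Types a b c : word N -> R.

Lemma pf_sym a b K : partial_form a b K = partial_form b a K.
Proof.
apply: eq_bigr => k _; apply: eq_bigr => t _; apply: eq_bigr => y _; exact: mulrC.
Qed.

Lemma pf_subl a b c K :
  partial_form (fun w => a w - b w) c K = partial_form a c K - partial_form b c K.
Proof.
rewrite /partial_form -sumrB; apply: eq_bigr => k _; rewrite -sumrB.
apply: eq_bigr => t _; rewrite -sumrB; apply: eq_bigr => y _; ring.
Qed.

Lemma pf_subr a b c K :
  partial_form c (fun w => a w - b w) K = partial_form c a K - partial_form c b K.
Proof. by rewrite pf_sym pf_subl (pf_sym a) (pf_sym b). Qed.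

Lemma pf_shift a b a' b' (c c' : R) K :
  (forall w, a w = b w + c) -> (forall w, a' w = b' w + c') ->
  partial_form a a' K = partial_form b b' K.
Proof.
move=> ha hb; apply: eq_bigr => k _; apply: eq_bigr => t _; apply: eq_bigr => y _.
rewrite !ha !hb; ring.
Qed.

Lemma layer_ge0 a k : 0 <= \sum_(t : k.-tuple 'I_N)
     \sum_(y <- nbrs (tval t)) (a (tval t) - a y) * (a (tval t) - a y).
Proof. by apply: sumr_ge0 => t _; apply: sumr_ge0 => y _; rewrite -expr2 sqr_ge0. Qed.

Lemma pf_ge0 a K : 0 <= partial_form a a K.
Proof. by apply: sumr_ge0 => k _; apply: layer_ge0. Qed.

Lemma pf_nondec a : nondecreasing_seq (partial_form a a).
Proof.
apply/nondecreasing_seqP => K; rewrite /partial_form [X in _ <= X]big_ord_recr /=.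
by rewrite lerDl layer_ge0.
Qed.

Lemma pf_zero_cst a : (forall K, partial_form a a K = 0) -> forall x, a x = a [::].
Proof.
move=> H.
have step : forall x i, a (rcons x i) = a x.
  move=> x i.
  have h1 := H (size x).
  have := psumr_eq0P (fun (k : 'I_(size x).+1) _ => layer_ge0 a k) h1 (i := Ordinal (ltnSn (size x))) isT.
  move=> /= h2.
  have hx : size x == size x by [].
  have h4 : forall t : (size x).-tuple 'I_N, true -> 0 <= \sum_(y <- nbrs (tval t)) (a (tval t) - a y) * (a (tval t) - a y).
    by move=> t _; apply: sumr_ge0 => y _; rewrite -expr2 sqr_ge0.
  have := psumr_eq0P h4 h2 (i := Tuple hx) isT.
  move=> /= /eqP; rewrite psumr_eq0; last by move=> y _; rewrite -expr2 sqr_ge0.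
  move=> /allP /(_ (rcons x i)).
  rewrite /nbrs mem_cat map_f ?mem_enum // => /(_ isT) /=.
  by rewrite mulf_eq0 orbb subr_eq0 => /eqP ->.
by elim/last_ind => [//|x i IH]; rewrite step.
Qed.

End PFgen.

Section Main.
Variables (R : realType) (N : nat) (d : 'I_N).

Lemma pf_v0_lim (eta : word N) (u : word N -> R) :
  cvgn (partial_form (v0 R eta) u) /\
  limn (partial_form (v0 R eta) u) = 2 * (u [::] - u eta).
Proof. apply: (ev_cst (m := size eta)) => K hK; exact: pf_v0. Qed.

Lemma v0_pot (eta : word N) : is_potential eta (v0 R eta).
Proof.
split.
- by have [] := pf_v0_lim eta (v0 R eta).
- exact: lap_v0.
- by move=> u _; have [_] := pf_v0_lim eta u.
Qed.

Lemma v0_nil (eta : word N) : v0 R eta [::] = (size eta)%:R.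
Proof. by rewrite /v0 /= subr0. Qed.

Lemma v0_self (eta : word N) : v0 R eta eta = 0.
Proof. by rewrite /v0 cpxx subrr. Qed.

Lemma uniq_pot (eta : word N) (v' : word N -> R) : is_potential eta v' ->
  exists c : R, forall w, v' w = v0 R eta w + c.
Proof.
case=> fe _ hE.
set v := v0 R eta.
set X := v' [::] - v' eta.
have hvv' : forall K, (size eta <= K)%N -> partial_form v' v K = 2 * X.
  by move=> K hK; rewrite pf_sym; apply: pf_v0.
have hXY : X = v [::] - v eta.
  have [_ l1] := ev_cst hvv'.
  have := hE v (proj1 (pf_v0_lim eta v)); rewrite /energy_form l1; lra.
have hle : forall K, partial_form v' v' K <= 2 * X.
  move=> K; rewrite -(hE v' fe); exact: nondecreasing_cvgn_le (pf_nondec v') fe K.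
set w := fun x => v' x - v x.
have hw : forall K, (size eta <= K)%N -> partial_form w w K <= 0.
  move=> K hK; rewrite /w pf_subl (pf_subr v' v v') (pf_subr v' v v) hvv' // pf_v0 // pf_v0 //.
  have := hle K; rewrite -/X hXY; lra.
have hw0 : forall K, partial_form w w K = 0.
  move=> K; apply/eqP; rewrite eq_le pf_ge0 andbT.
  apply: le_trans (hw (K + size eta)%N _); last by lia.
  by apply: (pf_nondec w); lia.
exists (w [::]) => x; have := pf_zero_cst hw0 x; rewrite /w => <-; ring.
Qed.

End Main.

Theorem proposition4p5 (R : realType) (N : nat) (hN : (1 <= N)%N) :
  (forall eta : word N, (1 <= size eta)%N ->
     let v := fun w : word N => ((size eta)%:R - (common_prefix w eta)%:R : R) in
     is_potential eta v /\
     (forall v' : word N -> R, is_potential eta v' ->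
        exists c : R, forall w, v' w = v w + c)) /\
  (forall (x y : word N) (vx vy : word N -> R),
     is_potential x vx -> is_potential y vy ->
     exists l : nat, shortest_path_length x y l /\
       energy_norm (fun w => vx w - vy w) = Num.sqrt (2 * l%:R)).
Proof.
pose d : 'I_N := Ordinal hN.
split.
  move=> eta _ /=; split; first exact: (v0_pot R d eta).
  by move=> v' hv'; exact: (uniq_pot d hv').
move=> x y vx vy hx hy.
have [c1 e1] := uniq_pot d hx.
have [c2 e2] := uniq_pot d hy.
exists (tdist x y); split.
  split; first exact: path_ex.
  by move=> p hp hl; exact: path_lb hp hl.
rewrite /energy_norm /energy_form; congr Num.sqrt.
set vx0 := v0 R x; set vy0 := v0 R y.
have hsh : forall w, vx w - vy w = (vx0 w - vy0 w) + (c1 - c2).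
  by move=> w; rewrite e1 e2 /vx0 /vy0; ring.
have key : forall K, (maxn (size x) (size y) <= K)%N ->
   partial_form (fun w => vx w - vy w) (fun w => vx w - vy w) K = 2 * (tdist x y)%:R.
  move=> K hK.
  have hxK : (size x <= K)%N by lia.
  have hyK : (size y <= K)%N by lia.
  rewrite (pf_shift (a := fun w => vx w - vy w) (b := fun w => vx0 w - vy0 w) (a' := fun w => vx w - vy w) (b' := fun w => vx0 w - vy0 w) K hsh hsh).
  rewrite (pf_subl vx0 vy0) (pf_subr vx0 vy0 vx0) (pf_subr vx0 vy0 vy0).
  rewrite !pf_v0 // /vx0 /vy0 !v0_nil !v0_self /v0 (cpC y x).
  have [h1 h2] := cp_size x y.
  have E : (tdist x y + 2 * common_prefix x y = size x + size y)%N by rewrite /tdist; lia.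
  have E2 : (tdist x y)%:R = (size x)%:R + (size y)%:R - 2 * (common_prefix x y)%:R :> R.
    by rewrite -(natrD R (size x)) -E natrD natrM; ring.
  rewrite E2; ring.
by have [_ ->] := ev_cst key.
Qed.
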